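(* Let $\sum_{\mathbf n\in\mathbb N_0^d}a_{\mathbf n}W_{\mathbf n}$ be a $d$-fold Walsh series and $\tau$ the quasimeasure generated by it. If $\mathbf g\notin\operatorname{supp}\tau$, then there is $w=w(\mathbf g)\in\mathbb N_0$ such that $S_{2^w\mathbf M}(\mathbf g)=0$ for all $\mathbf M\in\mathbb N^d$. As $w$ one may take the smallest rank of a dyadic cube $\Delta^{(w)}\ni\mathbf g$ such that $\tau(\Delta)=0$ for every dyadic cube $\Delta\subset\Delta^{(w)}$.
   Context: Fix $d\ge2$. $\mathbb G$ is the dyadic group: sequences $g=(g_k)_{k\ge0}$, $g_k\in\{0,1\}$, coordinatewise addition mod 2, product topology; $\mathbb G^d$ its $d$-th power. For $n\in\mathbb N_0$, $n=\sum_kn_k2^k$, $n_k\in\{0,1\}$. Dyadic interval of rank $k$: $\Delta^{(k)}_m=\{g: g_t=m_{k-1-t},\ 0\le t<k\}$; dyadic cube of rank $k$: $\Delta^{(k)}_{\mathbf m}=\prod_l\Delta^{(k)}_{m^l}$. Vector order coordinatewise, $\mathbf 1=(1,\dots,1)$. Walsh functions $W_n(g)=\prod_k(-1)^{g_kn_k}$, $W_{\mathbf n}(\mathbf g)=\prod_lW_{n^l}(g^l)$. Partial sums $S_{\mathbf N}(\mathbf g)=\sum_{\mathbf n<\mathbf N}a_{\mathbf n}W_{\mathbf n}(\mathbf g)$. Quasimeasure: $\tau$ on dyadic cubes with $\tau(\Delta^{(k)}_{\mathbf m})=\sum_{\boldsymbol\sigma\in\{0,1\}^d}\tau(\Delta^{(k+1)}_{2\mathbf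 m+\boldsymbol\sigma})$; generated by the series via $\tau(\Delta^{(k)})=2^{-kd}S_{2^k\mathbf 1}(\mathbf g)$, $\mathbf g\in\Delta^{(k)}$. The support $\operatorname{supp}\tau$ is $\mathbb G^d\setminus U$, where $U$ is the union of all dyadic cubes $\Delta_0$ such that $\tau(\Delta)=0$ for every dyadic cube $\Delta\subset\Delta_0$. *)

(* Defs.v *)
From HB Require Import structures.
From mathcomp Require Import all_boot all_order all_algebra.
From mathcomp Require Import reals.
Set Implicit Arguments. Unset Strict Implicit. Unset Printing Implicit Defensive.
Import Order.TTheory GRing.Theory Num.Theory.
Local Open Scope ring_scope.

(* The dyadic group G: sequences (g_k)_{k>=0} of bits. *)
Definition dyad := nat -> bool.
(* G^d : d-tuples of dyadic sequences; g l k is the k-th bit of the l-th coordinate. *)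
Definition dyadv (d : nat) := 'I_d -> dyad.

Definition nbit (n k : nat) : bool := odd (n %/ 2 ^ k).

(* Walsh function W_n(g) = prod_k (-1)^(g_k n_k); digits n_k vanish for k >= n. *)
Definition walsh {R : realType} (n : nat) (g : dyad) : R :=
  \prod_(k < n) (if nbit n k && g k then -1 else 1).

Definition walshv {R : realType} (d : nat) (n : 'I_d -> nat) (g : dyadv d) : R :=
  \prod_(l < d) walsh (n l) (g l).

Definition psum {R : realType} (d : nat) (a : ('I_d -> nat) -> R)
    (N : 'I_d -> nat) (g : dyadv d) : R :=
  \sum_(n : {ffun 'I_d -> 'I_(\max_(l < d) N l)%N} | [forall l, (n l < N l)%N])
     a (fun l => nat_of_ord (n l)) * walshv (fun l => nat_of_ord (n l)) g.

(* The dyadic cube of rank k containing h: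
   { g | g^l_t = h^l_t for all l and all t < k }.  Every dyadic cube
   Delta^(k)_m is of this form (for any h in it). *)
Definition cube (d : nat) (k : nat) (h : dyadv d) : dyadv d -> Prop :=
  fun g => forall (l : 'I_d) (t : nat), (t < k)%N -> g l t = h l t.

(* Quasimeasure generated by the series:
   tau(Delta^(k)) = 2^(-kd) S_{2^k 1}(h) for h in Delta^(k). *)
Definition tau {R : realType} (d : nat) (a : ('I_d -> nat) -> R)
    (k : nat) (h : dyadv d) : R :=
  ((2 ^ (k * d))%:R)^-1 * psum a (fun _ => 2 ^ k)%N h.

Definition tau_null_cube {R : realType} (d : nat) (a : ('I_d -> nat) -> R)
    (k : nat) (h : dyadv d) : Prop :=
  forall (k' : nat) (h' : dyadv d),
    (forall g, cube k' h' g -> cube k h g) -> tau a k' h' = 0.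

(* g lies in the support of tau iff it is not in the union U of all dyadic
   cubes Delta_0 on whose subcubes tau vanishes. *)
Definition in_supp {R : realType} (d : nat) (a : ('I_d -> nat) -> R)
    (g : dyadv d) : Prop :=
  ~ (exists (k : nat) (h : dyadv d), cube k h g /\ tau_null_cube a k h).

Definition null_rank {R : realType} (d : nat) (a : ('I_d -> nat) -> R)
    (g : dyadv d) (w : nat) : Prop :=
  exists h : dyadv d, cube w h g /\ tau_null_cube a w h.

(* Main.v *)
Require Import Defs.
From HB Require Import structures.
From mathcomp Require Import all_boot all_order all_algebra.
From mathcomp Require Import reals.
From mathcomp Require Import ring lra.
From Stdlib Require Import Classical FunctionalExtensionality.
Import Order.TTheory GRing.Theory Num.Theory.
Local Open Scope ring_scope.

Lemma nbit_small (n k : nat) : (n < 2 ^ k)%N -> nbit n k = false.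
Proof. by move=> h; rewrite /nbit divn_small. Qed.

Lemma nbit0 n : nbit n 0 = odd n.
Proof. by rewrite /nbit expn0 divn1. Qed.

Lemma nbitS n t : nbit n t.+1 = nbit (n %/ 2) t.
Proof. by rewrite /nbit expnS divnMA. Qed.

Lemma nbit_div n w t : nbit n (w + t) = nbit (n %/ 2 ^ w) t.
Proof. by rewrite /nbit expnD divnMA. Qed.

Lemma bits_inj L : forall a b, (a < 2 ^ L)%N -> (b < 2 ^ L)%N ->
  (forall t, (t < L)%N -> nbit a t = nbit b t) -> a = b.
Proof.
elim: L => [|L IH] a b ha hb h.
  by move: ha hb; rewrite expn0 !ltnS !leqn0 => /eqP -> /eqP ->.
have h0 := h 0%N (ltn0Sn L). rewrite !nbit0 in h0.
have e : (a %/ 2 = b %/ 2)%N.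
  apply: IH.
  - by rewrite ltn_divLR // -expnSr.
  - by rewrite ltn_divLR // -expnSr.
  - by move=> t ht; rewrite -!nbitS; apply: h.
by rewrite (divn_eq a 2) (divn_eq b 2) e !modn2 h0.
Qed.

Lemma prod_tail (R : realType) (n L L' : nat) (g : dyad) : (L <= L')%N -> (n < 2 ^ L)%N ->
  \prod_(0 <= k < L) (if nbit n k && g k then -1 else 1) =
  \prod_(0 <= k < L') (if nbit n k && g k then -1 else 1) :> R.
Proof.
move=> hL hn; rewrite (big_cat_nat (leq0n L) hL) /=.
rewrite [X in _ = _ * X]big1_seq ?mulr1 // => k; rewrite mem_index_iota => /andP[_ /andP[hk _]].
rewrite nbit_small //; apply: (leq_trans hn); by rewrite leq_exp2l.
Qed.

Lemma walsh_K (R : realType) n K (g : dyad) : (n < 2 ^ K)%N ->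
  walsh n g = \prod_(k < K) (if nbit n k && g k then -1 else 1) :> R.
Proof.
move=> hn; rewrite /walsh -(big_mkord xpredT (fun k => if nbit n k && g k then -1 else 1)).
rewrite -(big_mkord xpredT (fun k => if nbit n k && g k then -1 else (1 : R))).
have [le|le] := leqP n K.
  by apply: prod_tail => //; apply: ltn_expl.
by symmetry; apply: prod_tail => //; apply: ltnW.
Qed.

Definition sgn (R : realType) (b c : bool) : R := if b && c then -1 else 1.

Definition ext1 {K : nat} (y : {ffun 'I_K -> bool}) : dyad :=
  fun t => if insub t is Some i then y i else false.

Lemma ext1E K (y : {ffun 'I_K -> bool}) (i : 'I_K) : ext1 y i = y i.
Proof. by rewrite /ext1 valK. Qed.

Definition fk (R : realType) (w j : nat) (gl : dyad) (k : nat) (c : bool) : R :=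
  if (k < w)%N then (if c == gl k then 1 else 0)
  else (2%:R)^-1 * (sgn R (nbit j (k - w)) c * sgn R (nbit j (k - w)) (gl k)).

Definition psi (R : realType) w j gl K (y : {ffun 'I_K -> bool}) : R :=
  \prod_(k < K) fk R w j gl k (y k).

Definition Psi (R : realType) w m gl K (y : {ffun 'I_K -> bool}) : R :=
  \sum_(j < m) psi R w j gl K y.

Lemma fk_sum (R : realType) w j gl k b :
  \sum_(c : bool) fk R w j gl k c * sgn R b c =
  (if (k < w)%N || (b == nbit j (k - w)) then 1 else 0) * sgn R b (gl k).
Proof.
rewrite big_bool /fk /sgn; case: (k < w)%N; case: b; case: (gl k);
  case: (nbit j (k-w)) => /=; by field.
Qed.

Lemma prod_ind (R : realType) (I : finType) (P : pred I) (F : I -> R) :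
  \prod_(i : I) ((if P i then 1 else 0) * F i) =
  (if [forall i, P i] then 1 else 0) * \prod_i F i.
Proof.
rewrite big_split /=; congr (_ * _).
case: (boolP [forall i, P i]) => [/forallP h | /forallPn [i hi]].
  by apply: big1 => i _; rewrite h.
by rewrite (bigD1 i) //= (negbTE hi) mul0r.
Qed.

Lemma bits_block (w K n j : nat) : (n < 2 ^ K)%N -> (w <= K)%N -> (j < 2 ^ (K - w))%N ->
  [forall k : 'I_K, (k < w)%N || (nbit n k == nbit j (k - w))] = (n %/ 2 ^ w == j)%N.
Proof.
move=> hn hw hj; apply/forallP/eqP => [h | <- k].
  apply: (@bits_inj (K - w)) => //.
    by rewrite ltn_divLR ?expn_gt0 // -expnD subnK.
  move=> t ht; have htK : (w + t < K)%N by rewrite -ltn_subRL.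
  have := h (Ordinal htK) => /=; rewrite ltnNge leq_addr /= addKn => /eqP <-.
  by rewrite nbit_div.
case: (ltnP k w) => //= hk; by rewrite -nbit_div subnKC.
Qed.

Lemma oneD (R : realType) (w K m n : nat) (gl : dyad) :
  (n < 2 ^ K)%N -> (w <= K)%N -> (2 ^ w * m <= 2 ^ K)%N ->
  \sum_(y : {ffun 'I_K -> bool}) Psi R w m gl K y * walsh n (ext1 y) =
  (if (n < 2 ^ w * m)%N then 1 else 0) * walsh n gl.
Proof.
move=> hn hwK hm.
have hm' : (m <= 2 ^ (K - w))%N.
  by rewrite -(leq_pmul2l (expn_gt0 2 w)) -expnD subnKC.
have eW : forall y : {ffun 'I_K -> bool},
    walsh n (ext1 y) = \prod_(k < K) sgn R (nbit n k) (y k).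
  by move=> y; rewrite (walsh_K _ _ _ _ hn); apply: eq_bigr => k _; rewrite ext1E.
under eq_bigr do rewrite eW /Psi mulr_suml.
rewrite exchange_big /=.
have ej : forall j : 'I_m,
  \sum_(y : {ffun 'I_K -> bool}) psi R w j gl K y * \prod_(k < K) sgn R (nbit n k) (y k)
  = (if (n %/ 2 ^ w == j)%N then 1 else 0) * walsh n gl.
  move=> j.
  transitivity (\prod_(k < K) \sum_(c : bool) fk R w j gl k c * sgn R (nbit n k) c).
    rewrite bigA_distr_bigA; apply: eq_bigr => y _; rewrite /psi -big_split //.
  under eq_bigr do rewrite fk_sum.
  rewrite (@prod_ind R _ (fun k : 'I_K => (k < w)%N || (nbit n k == nbit j (k - w)))
             (fun k : 'I_K => sgn R (nbit n k) (gl k))).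
  rewrite bits_block //; last by apply: leq_trans hm'.
  by rewrite (walsh_K _ _ _ _ hn).
under eq_bigr do rewrite ej.
rewrite -mulr_suml; congr (_ * _).
case: ltnP => h.
  have hq : (n %/ 2 ^ w < m)%N by rewrite ltn_divLR ?expn_gt0 // mulnC.
  rewrite (bigD1 (Ordinal hq)) //= eqxx big1 ?addr0 // => i hi.
  rewrite ifF //; apply/negbTE; move: hi; apply: contra => /eqP e.
  by apply/eqP/val_inj; rewrite /= -e.
apply: big1 => i _; rewrite ifF //; apply/negbTE/eqP => e.
have := ltn_ord i; rewrite -e ltnNge leq_divRL ?expn_gt0 // mulnC h //.
Qed.

Definition ext {d K : nat} (x : {ffun 'I_d -> {ffun 'I_K -> bool}}) : dyadv d :=
  fun l => ext1 (x l).

Definition Phi (R : realType) {d : nat} w K (M : 'I_d -> nat) (g : dyadv d)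
  (x : {ffun 'I_d -> {ffun 'I_K -> bool}}) : R :=
  \prod_(l < d) Psi R w (M l) (g l) K (x l).

Lemma perN (R : realType) d w K (M : 'I_d -> nat) (g : dyadv d) (n : 'I_d -> nat) :
  (forall l, n l < 2 ^ K)%N -> (w <= K)%N -> (forall l, 2 ^ w * M l <= 2 ^ K)%N ->
  \sum_(x : {ffun 'I_d -> {ffun 'I_K -> bool}}) Phi R w K M g x * walshv n (ext x) =
  (if [forall l, (n l < 2 ^ w * M l)%N] then 1 else 0) * walshv n g.
Proof.
move=> hn hw hM.
transitivity (\prod_(l < d) \sum_(y : {ffun 'I_K -> bool})
                 Psi R w (M l) (g l) K y * walsh (n l) (ext1 y)).
  rewrite bigA_distr_bigA; apply: eq_bigr => x _; rewrite /Phi /walshv /ext -big_split //.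
under eq_bigr do rewrite oneD //.
by rewrite (@prod_ind R _ (fun l => (n l < 2 ^ w * M l)%N) (fun l => walsh (n l) (g l))).
Qed.

Lemma Psi0 (R : realType) w m (gl : dyad) K (y : {ffun 'I_K -> bool}) (t : 'I_w) :
  (w <= K)%N -> ext1 y t != gl t -> Psi R w m gl K y = 0.
Proof.
move=> hw ht; apply: big1 => j _; rewrite /psi (bigD1 (widen_ord hw t)) //= /fk /= ltn_ord.
have e : ext1 y t = y (widen_ord hw t) := ext1E _ y (widen_ord hw t).
by rewrite -e (negbTE ht) mul0r.
Qed.

Lemma transport_le (R : realType) d (N : 'I_d -> nat) B B' (G : ('I_d -> nat) -> R) :
  (0 < B)%N -> (B <= B')%N -> (forall l, N l <= B)%N ->
  \sum_(n : {ffun 'I_d -> 'I_B'} | [forall l, (n l < N l)%N]) G (fun l => nat_of_ord (n l)) =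
  \sum_(n : {ffun 'I_d -> 'I_B} | [forall l, (n l < N l)%N]) G (fun l => nat_of_ord (n l)).
Proof.
move=> hB hBB hN.
pose o := Ordinal hB.
pose h := fun (j : {ffun 'I_d -> 'I_B}) => [ffun l => widen_ord hBB (j l)] : {ffun 'I_d -> 'I_B'}.
pose h' := fun (i : {ffun 'I_d -> 'I_B'}) => [ffun l => insubd o (nat_of_ord (i l))] : {ffun 'I_d -> 'I_B}.
rewrite (reindex_onto h h') /=.
  apply: eq_big => j.
    have -> : h' (h j) = j.
      by apply/ffunP => l; rewrite !ffunE; apply: val_inj; rewrite val_insubd /= ltn_ord.
    rewrite eqxx andbT; apply: eq_forallb => l; by rewrite ffunE.
  move=> _; congr G; apply: functional_extensionality => l; by rewrite ffunE.
move=> i /forallP hi; apply/ffunP => l; rewrite !ffunE; apply: val_inj => /=.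
by rewrite val_insubd (leq_trans (hi l) (hN l)).
Qed.

Lemma transport (R : realType) d (N : 'I_d -> nat) B B' (G : ('I_d -> nat) -> R) :
  (0 < B)%N -> (0 < B')%N -> (forall l, N l <= B)%N -> (forall l, N l <= B')%N ->
  \sum_(n : {ffun 'I_d -> 'I_B} | [forall l, (n l < N l)%N]) G (fun l => nat_of_ord (n l)) =
  \sum_(n : {ffun 'I_d -> 'I_B'} | [forall l, (n l < N l)%N]) G (fun l => nat_of_ord (n l)).
Proof.
move=> hB hB' hN hN'.
rewrite -(transport_le _ _ _ _ _ G hB (leq_maxl B B') hN).
by rewrite (transport_le _ _ _ _ _ G hB' (leq_maxr B B') hN').
Qed.

Lemma main_lemma (R : realType) d (hd : (0 < d)%N) (a : ('I_d -> nat) -> R) (g : dyadv d) w h :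
  cube w h g -> tau_null_cube a w h ->
  forall M : 'I_d -> nat, (forall l, (0 < M l)%N) ->
  psum a (fun l => 2 ^ w * M l)%N g = 0.
Proof.
move=> hc hnull M hM.
pose K := (w + \max_(l < d) M l)%N.
have hwK : (w <= K)%N by rewrite leq_addr.
have hMK : forall l, (2 ^ w * M l <= 2 ^ K)%N.
  move=> l; rewrite /K expnD leq_pmul2l ?expn_gt0 //.
  apply: (leq_trans (ltnW (ltn_expl (M l) (ltnSn 1)))); rewrite leq_exp2l //.
  exact: leq_bigmax.
pose l0 := Ordinal hd.
have key : \sum_(x : {ffun 'I_d -> {ffun 'I_K -> bool}})
    Phi R w K M g x * psum a (fun _ => 2 ^ K)%N (ext x) = 0.
  apply: big1 => x _.
  case: (boolP [forall l, [forall t : 'I_w, ext1 (x l) t == g l t]]) =>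
      [/forallP hx | /forallPn [l /forallPn [t ht]]].
    have ht : tau a K (ext x) = 0.
      apply: hnull => g' hg' l t htw.
      rewrite (hg' l t (leq_trans htw hwK)) /ext.
      have := forallP (hx l) (Ordinal htw) => /= /eqP ->.
      exact: hc.
    move: ht; rewrite /tau => /eqP; rewrite mulf_eq0 invr_eq0 pnatr_eq0 expn_eq0 /=.
    by move=> /eqP ->; rewrite mulr0.
  by rewrite /Phi (bigD1 l) //= (Psi0 _ _ _ _ _ _ t hwK ht) !mul0r.
rewrite -key /psum.
set B2 := (\max_(l < d) 2 ^ K)%N.
have hB2 : (2 ^ K <= B2)%N by apply: (@leq_bigmax_cond _ _ (fun _ => 2 ^ K)%N l0).
have hB1 : (2 ^ w * M l0 <= \max_(l < d) 2 ^ w * M l)%N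
  by apply: (@leq_bigmax_cond _ _ (fun l => 2 ^ w * M l)%N l0).
transitivity (\sum_(n : {ffun 'I_d -> 'I_B2} | [forall l, (n l < 2 ^ K)%N])
   a (fun l => nat_of_ord (n l)) * ((if [forall l, (n l < 2 ^ w * M l)%N] then 1 else 0)
     * walshv (fun l => nat_of_ord (n l)) g)).
  rewrite (transport _ _ _ _ B2 (fun f => a f * walshv f g)).
  - rewrite big_mkcond [RHS]big_mkcond; apply: eq_bigr => n _.
    case: (boolP [forall l, (n l < 2 ^ w * M l)%N]) => hP.
      have -> : [forall l, (n l < 2 ^ K)%N].
        by apply/forallP => l; apply: leq_trans (hMK l); apply: (forallP hP).
      by rewrite mul1r.
    by case: ifP => _ //; rewrite mul0r mulr0.
  - apply: leq_trans hB1; by rewrite muln_gt0 expn_gt0 hM.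
  - apply: leq_trans hB2; by rewrite expn_gt0.
  - by move=> l; apply: (@leq_bigmax_cond _ _ (fun l => 2 ^ w * M l)%N l).
  - by move=> l; apply: leq_trans hB2.
symmetry. under eq_bigr do rewrite mulr_sumr.
rewrite exchange_big /=; apply: eq_bigr => n /forallP hn.
rewrite -(perN R d w K M g (fun l => nat_of_ord (n l))) //.
rewrite mulr_sumr; apply: eq_bigr => x _; by rewrite mulrCA.
Qed.

Theorem proposition4 (R : realType) (d : nat) (hd : (2 <= d)%N)
    (a : ('I_d -> nat) -> R) (g : dyadv d) :
  ~ in_supp a g ->
  (exists w : nat, forall M : 'I_d -> nat, (forall l, (0 < M l)%N) ->
       psum a (fun l => 2 ^ w * M l)%N g = 0)
  /\
  (forall w : nat, null_rank a g w -> (forall k, null_rank a g k -> (w <= k)%N) ->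
     forall M : 'I_d -> nat, (forall l, (0 < M l)%N) ->
       psum a (fun l => 2 ^ w * M l)%N g = 0).
Proof.
move=> hns.
have hd0 : (0 < d)%N by apply: leq_trans hd.
split.
  have [k [h [hc hn]]] : exists k h, cube k h g /\ tau_null_cube a k h by apply: NNPP.
  by exists k; exact: (main_lemma R d hd0 a g k h hc hn).
move=> w [h [hc hn]] _; exact: (main_lemma R d hd0 a g w h hc hn).
Qed.
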